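(* Let $X\sim\mathsf{Bernoulli}(p)$ with $p\in[\frac12,1)$ and let $P_{Y|X}=\mathsf{BIBO}(\alpha,\beta)$ (i.e. $P_{Y|X}(\cdot|0)=(\bar\alpha,\alpha)$, $P_{Y|X}(\cdot|1)=(\beta,\bar\beta)$) with $\alpha,\beta\in[0,\frac12)$ and $\bar\alpha\bar p>\beta p$. Then $g^\infty(0)>0$ if and only if $\alpha\bar\alpha\bar p^2<\beta\bar\beta p^2$ and $p\in(\frac12,1)$.
   Context: For $a\in[0,1]$, $\bar a=1-a$; $\Pr(X=1)=p$. For discrete random variables, $\mathsf{P}_{\mathsf{c}}(X)=\max_xP_X(x)$, $\mathsf{P}_{\mathsf{c}}(X|Z)=\sum_z\max_xP_{XZ}(x,z)$, and $I_\infty(X;Z)=\log\frac{\mathsf{P}_{\mathsf{c}}(X|Z)}{\mathsf{P}_{\mathsf{c}}(X)}$ (Arimoto's mutual information of order $\infty$). For $\varepsilon\ge0$, $g^\infty(\varepsilon)=\sup\{I_\infty(Y;Z): P_{Z|Y},\ X - Y - Z,\ I_\infty(X;Z)\le\varepsilon\}$, the supremum over channels $P_{Z|Y}$ into finite alphabets with $X - Y - Z$ a Markov chain. (Equivalently, $g^\infty(0)>0$ means that some such $Z$ with $\mathsf{P}_{\mathsf{c}}(X|Z)=\mathsf{P}_{\mathsf{c}}(X)$ has $\mathsf{P}_{\mathsf{c}}(Y|Z)>\mathsf{P}_{\mathsf{c}}(Y)$.) *)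

(* Defs.v *)
From HB Require Import structures.
From mathcomp Require Import all_boot all_order all_algebra.
From mathcomp Require Import all_classical all_reals ereal exp.
Set Implicit Arguments. Unset Strict Implicit. Unset Printing Implicit Defensive.
Import Order.TTheory GRing.Theory Num.Theory.
Local Open Scope ring_scope.
Local Open Scope classical_set_scope.

Section Defs.
Variable R : realType.

Definition stochastic (A B : finType) (V : A -> B -> R) : Prop :=
  (forall a b, 0 <= V a b) /\ (forall a, \sum_(b : B) V a b = 1).

Definition Pc (A : finType) (P : A -> R) : R := \big[Num.max/0]_(a : A) P a.

Definition Pc_cond (A B : finType) (P : A -> B -> R) : R :=
  \sum_(b : B) \big[Num.max/0]_(a : A) P a b.

(* Arimoto mutual information of order infinity, natural log *)
Definition Iinf (A B : finType) (P : A -> B -> R) (PA : A -> R) : R :=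
  ln (Pc_cond P / Pc PA).

Definition bern (p : R) (x : bool) : R := if x then p else 1 - p.

Definition BIBO (alpha beta : R) (x y : bool) : R :=
  if x then (if y then 1 - beta else beta)
  else (if y then alpha else 1 - alpha).

Definition PXZ (PX : bool -> R) (W : bool -> bool -> R) (Z : finType)
  (V : bool -> Z -> R) (x : bool) (z : Z) : R :=
  \sum_(y : bool) PX x * W x y * V y z.
Definition PY (PX : bool -> R) (W : bool -> bool -> R) (y : bool) : R :=
  \sum_(x : bool) PX x * W x y.
Definition PYZ (PX : bool -> R) (W : bool -> bool -> R) (Z : finType)
  (V : bool -> Z -> R) (y : bool) (z : Z) : R :=
  PY PX W y * V y z.

Definition ginf (PX : bool -> R) (W : bool -> bool -> R) (eps : R) : \bar R :=
  ereal_sup [set r%:E | r in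
    [set r : R | exists (Z : finType) (V : bool -> Z -> R),
       stochastic V /\ Iinf (PXZ PX W V) PX <= eps /\
       r = Iinf (PYZ PX W V) (PY PX W)]].

End Defs.

(* Main.v *)
Require Import Defs.
From HB Require Import structures.
From mathcomp Require Import all_boot all_order all_algebra.
From mathcomp Require Import all_classical all_reals ereal exp.
From mathcomp Require Import ring lra.
Import Order.TTheory GRing.Theory Num.Theory.
Local Open Scope ring_scope.

Section H.
Context {R : realType}.

Lemma bigmax_bool (F : bool -> R) :
  \big[Num.max/0]_(a : bool) F a = Num.max (F true) (Num.max (F false) 0).
Proof. by rewrite /index_enum !unlock. Qed.

Lemma mxl (x y : R) : y <= x -> Num.max x y = x.
Proof. by move=> h; case: (lerP x y) => [h'|//]; apply/eqP; rewrite eq_le h h'. Qed.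
Lemma mxl0 (x : R) : 0 <= x -> Num.max x 0 = x.
Proof. exact: mxl. Qed.
Lemma mxr (x y : R) : x <= y -> Num.max x y = y.
Proof. by move=> h; case: (lerP x y) => [//|h']; move: h'; rewrite ltNge h. Qed.
Lemma mx1 (x y : R) : x <= Num.max x y.
Proof. by case: (lerP x y) => [h|h]. Qed.
Lemma mx2 (x y : R) : y <= Num.max x y.
Proof. by case: (lerP x y) => [h|h] //; rewrite ltW. Qed.
Lemma mxle (x y z : R) : x <= z -> y <= z -> Num.max x y <= z.
Proof. by case: (lerP x y). Qed.
Lemma mxlt (x y z : R) : x < z -> y < z -> Num.max x y < z.
Proof. by case: (lerP x y). Qed.

Lemma key (Z : finType) (a b : Z -> R) (D E q0 q1 : R) :
  0 < D -> 0 < q0 -> 0 < q1 -> (forall z, 0 <= a z) -> (forall z, 0 <= b z) ->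
  \sum_z a z = 1 -> \sum_z b z = 1 -> (forall z, D * a z <= E * b z) ->
  Num.max q1 q0 < \sum_z Num.max (q1 * b z) (q0 * a z) ->
  D < E /\ D * q1 < E * q0.
Proof.
move=> D0 q00 q10 a0 b0 sa sb hab hs; split.
  rewrite ltNge; apply/negP => hED.
  have ab : forall z, a z <= b z.
    move=> z; rewrite -(ler_pM2l D0); apply: le_trans (hab z) _.
    by rewrite ler_wpM2r.
  have eab : forall z, b z - a z = 0.
    move=> z; apply: (@psumr_eq0P _ _ predT (fun z => b z - a z)) => //.
      by move=> i _; rewrite subr_ge0.
    by rewrite sumrB sa sb subrr.
  have : \sum_z Num.max (q1 * b z) (q0 * a z) = Num.max q1 q0.
    case: (lerP q1 q0) => h.
      under eq_bigr => z _.
        rewrite mxr; last by move/eqP: (eab z); rewrite subr_eq0 => /eqP ->; rewrite ler_wpM2r.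
      over.
      by rewrite -mulr_sumr sa mulr1.
    under eq_bigr => z _.
      rewrite mxl; last by move/eqP: (eab z); rewrite subr_eq0 => /eqP ->; rewrite ler_wpM2r // ltW.
    over.
    by rewrite -mulr_sumr sb mulr1.
  by move=> e; rewrite e ltxx in hs.
rewrite ltNge; apply/negP => hED.
have : \sum_z Num.max (q1 * b z) (q0 * a z) = q1.
  under eq_bigr => z _.
    rewrite mxl; last first.
      have := hab z; have := a0 z; have := b0 z; nra.
  over.
  by rewrite -mulr_sumr sb mulr1.
move=> e; rewrite e in hs.
have := mx1 q1 q0; lra.
Qed.


Lemma PXZ_E (p al be : R) (Z : finType) (V : bool -> Z -> R) x z :
  PXZ (bern p) (BIBO al be) V x z =
  if x then p * be * V false z + p * (1 - be) * V true z
  else (1 - p) * (1 - al) * V false z + (1 - p) * al * V true z.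
Proof. rewrite /PXZ big_bool /bern /BIBO; case: x => /=; ring. Qed.

Lemma PY_E (p al be : R) y :
  PY (bern p) (BIBO al be) y =
  if y then (1 - p) * al + p * (1 - be) else (1 - p) * (1 - al) + p * be.
Proof. rewrite /PY big_bool /bern /BIBO; case: y => /=; ring. Qed.

Lemma Pc_bern (p : R) : 1/2 <= p -> p <= 1 -> Pc (bern p) = p.
Proof.
move=> h1 h2; rewrite /Pc bigmax_bool /bern mxl0 ?mxl //; lra.
Qed.

Lemma Pc_PY (p al be : R) : 0 <= p <= 1 -> 0 <= al <= 1 -> 0 <= be <= 1 ->
  Pc (PY (bern p) (BIBO al be)) =
  Num.max ((1 - p) * al + p * (1 - be)) ((1 - p) * (1 - al) + p * be).
Proof.
move=> hp ha hb; rewrite /Pc bigmax_bool !PY_E mxl0 //; nra.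
Qed.


End H.

Local Notation DD p a b := ((1 - p) * (1 - a) - p * b).
Local Notation EE p a b := (p * (1 - b) - (1 - p) * a).
Local Notation Q0 p a b := ((1 - p) * (1 - a) + p * b).
Local Notation Q1 p a b := ((1 - p) * a + p * (1 - b)).

Theorem corollary2 (R : realType) (p alpha beta : R) :
  1 / 2 <= p -> p < 1 ->
  0 <= alpha -> alpha < 1 / 2 ->
  0 <= beta -> beta < 1 / 2 ->
  beta * p < (1 - alpha) * (1 - p) ->
  ((0 < ginf (bern p) (BIBO alpha beta) 0)%E <->
   (alpha * (1 - alpha) * (1 - p) ^+ 2 < beta * (1 - beta) * p ^+ 2
    /\ 1 / 2 < p)).
Proof.
move=> hp1 hp2 ha1 ha2 hb1 hb2 hD.
have D0 : 0 < DD p alpha beta by lra.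
have hED : EE p alpha beta - DD p alpha beta = 2 * p - 1 by ring.
have hEQ : EE p alpha beta * Q0 p alpha beta - DD p alpha beta * Q1 p alpha beta
   = 2 * (beta * (1 - beta) * p ^+ 2 - alpha * (1 - alpha) * (1 - p) ^+ 2) by ring.
have q00 : 0 < Q0 p alpha beta by nra.
have q10 : 0 < Q1 p alpha beta by nra.
have n1 : 0 <= (1 - p) * (1 - alpha) by nra.
have n2 : 0 <= (1 - p) * alpha by nra.
have n3 : 0 <= p * beta by nra.
have n4 : 0 <= p * (1 - beta) by nra.
split.
- move=> /ereal_sup_gtP [_ [r [Z [V [[V0 V1] [HX ->]]]] <-]]; rewrite lte_fin => Hr.
  rewrite /Iinf Pc_bern in HX; try lra.
  have eX : Pc_cond (PXZ (bern p) (BIBO alpha beta) V) =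
    \sum_z Num.max (p * beta * V false z + p * (1 - beta) * V true z)
                   ((1 - p) * (1 - alpha) * V false z + (1 - p) * alpha * V true z).
    rewrite /Pc_cond; apply: eq_bigr => z _; rewrite bigmax_bool !PXZ_E mxl0 //.
    have := V0 false z; have := V0 true z; nra.
  have sP1 : \sum_z (p * beta * V false z + p * (1 - beta) * V true z) = p.
    by rewrite big_split /= -!mulr_sumr !V1; ring.
  rewrite eX in HX.
  set s := \sum_z _ in HX.
  have hs : s <= p.
    rewrite leNgt; apply/negP => h.
    have : 0 < ln (s / p) by apply: ln_gt0; rewrite ltr_pdivlMr ?mul1r //; lra.
    lra.
  have hz0 : forall z, Num.max (p * beta * V false z + p * (1 - beta) * V true z) ((1 - p) * (1 - alpha) * V false z + (1 - p) * alpha * V true z) - (p * beta * V false z + p * (1 - beta) * V true z) = 0.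
    move=> z0; apply: (@psumr_eq0P _ _ predT (fun z => Num.max (p * beta * V false z + p * (1 - beta) * V true z) ((1 - p) * (1 - alpha) * V false z + (1 - p) * alpha * V true z) - (p * beta * V false z + p * (1 - beta) * V true z))) => //.
      by move=> i _; rewrite subr_ge0 mx1.
    apply/eqP; rewrite eq_le sumr_ge0 ?andbT; last by move=> i _; rewrite subr_ge0 mx1.
    by rewrite sumrB sP1 -/s; lra.
  have hz : forall z, DD p alpha beta * V false z <= EE p alpha beta * V true z.
    move=> z; have := hz0 z; have := mx2 (p * beta * V false z + p * (1 - beta) * V true z) ((1 - p) * (1 - alpha) * V false z + (1 - p) * alpha * V true z); lra.
  have eY : Pc_cond (PYZ (bern p) (BIBO alpha beta) V) =
    \sum_z Num.max (Q1 p alpha beta * V true z) (Q0 p alpha beta * V false z).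
    rewrite /Pc_cond; apply: eq_bigr => z _; rewrite bigmax_bool /PYZ !PY_E mxl0 //.
    have := V0 false z; nra.
  rewrite /Iinf eY Pc_PY in Hr; try lra.
  have mx0 : 0 < Num.max (Q1 p alpha beta) (Q0 p alpha beta) by apply: lt_le_trans (mx1 _ _).
  have h1 : 1 < (\sum_z Num.max (Q1 p alpha beta * V true z) (Q0 p alpha beta * V false z))
     / Num.max (Q1 p alpha beta) (Q0 p alpha beta).
    rewrite ltNge; apply/negP => h; have := ln_le0 h; lra.
  rewrite ltr_pdivlMr // mul1r in h1.
  have [k1 k2] := @key R Z (V false) (V true) _ _ _ _ D0 q00 q10 (fun z => V0 false z) (fun z => V0 true z) (V1 false) (V1 true) hz h1.
  split; nra.
- move=> [H1 H2].
  have E0 : 0 < EE p alpha beta by lra.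
  pose t := DD p alpha beta / EE p alpha beta.
  have ht : EE p alpha beta * t = DD p alpha beta.
    by rewrite /t mulrC divfK // gt_eqF.
  have t0 : 0 < t by rewrite /t divr_gt0.
  have t1 : t < 1 by rewrite /t ltr_pdivrMr // mul1r; lra.
  have hq : Q1 p alpha beta * t < Q0 p alpha beta.
    rewrite -(ltr_pM2l E0) mulrCA ht; nra.
  pose V := fun (y z : bool) => if y then (if z then t else 1 - t) else (if z then 1 else 0 : R).
  apply/ereal_sup_gtP.
  exists (ln (Pc_cond (PYZ (bern p) (BIBO alpha beta) V) / Pc (PY (bern p) (BIBO alpha beta))))%:E; last first.
    rewrite lte_fin; apply: ln_gt0.
    rewrite Pc_PY; try lra.
    have mx0 : 0 < Num.max (Q1 p alpha beta) (Q0 p alpha beta) by apply: lt_le_trans (mx1 _ _).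
    rewrite ltr_pdivlMr // mul1r /Pc_cond big_bool !bigmax_bool /PYZ !PY_E /V /=.
    apply: (@lt_le_trans _ _ (Q0 p alpha beta * 1 + Q1 p alpha beta * (1 - t))).
      apply: mxlt; nra.
    apply: lerD; last exact: mx1.
    exact: le_trans (mx1 _ _) (mx2 _ _).
  exists (ln (Pc_cond (PYZ (bern p) (BIBO alpha beta) V) / Pc (PY (bern p) (BIBO alpha beta)))) => //.
  exists bool, V; split; last split => //.
    split => [[] [] /=|[]]; rewrite ?big_bool /V /=; lra.
  rewrite /Iinf Pc_bern; try lra.
  apply: ln_le0; rewrite ler_pdivrMr ?mul1r; last lra.
  rewrite /Pc_cond big_bool !bigmax_bool !PXZ_E /V /=.
  apply: le_trans (lerD (_ : _ <= p * beta * 1 + p * (1 - beta) * t)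
                        (_ : _ <= p * beta * 0 + p * (1 - beta) * (1 - t))) _.
  + apply: mxle; first lra. apply: mxle; nra.
  + apply: mxle; first lra. apply: mxle; nra.
  + lra.
Qed.
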